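(* Let $b_1<\dots<b_n$ be the black and $w_1<\dots<w_n$ the white nodes of $\mathbf N=\{1,\dots,2n\}$, and for black $i$, white $j$ let $\epsilon_{i,j}=(-1)^{[i>j]}\,\mathrm{sign}(i,j)\in\{\pm1\}$, where $(-1)^{[i>j]}$ is $-1$ if $i>j$ and $1$ otherwise (these are the signs of the entries of $M=[(-1)^{[i>j]}\mathrm{sign}(i,j)Y_{i,j}]^{i=b_1..b_n}_{j=w_1..w_n}$). Then: (a) if there is no couple of consecutive white nodes $(m,m+1)$ with $b_a<m<m+1<b_{a+1}$, then $\epsilon_{b_{a+1},w}=-\epsilon_{b_a,w}$ for every white $w$; symmetrically, if there is no couple of consecutive black nodes strictly between $w_c$ and $w_{c+1}$, then $\epsilon_{b,w_{c+1}}=-\epsilon_{b,w_c}$ for every black $b$ (so $M$ is a block matrix whose blocks have checkerboard sign pattern). (b) There exist $r_1,\dots,r_n,c_1,\dots,c_n\in\{\pm1\}$ with $r_a c_d\,\epsilon_{b_a,w_d}=(-1)^{a+d}$ for all $a,d$; if $t$ denotes the number of $-1$'s among the $r_a$ and $c_d$ (whose parity is independent of the choice), then $$(-1)^t=\mathrm{sign}_c(\mathbf N)\,(-1)^{\sum_{i=1}^{2k}\lfloor n_i/2\rfloor}\ \text{ if node 1 is black},\qquad (-1)^t=(-1)^n\,\mathrm{sign}_c(\mathbf N)\,(-1)^{\sum_{i=1}^{2k}\lfloor n_i/2\rfloor}\ \text{ if node 1 is white}.$$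
   Context: Nodes $1,\dots,2n$ arranged counterclockwise, each colored black or white, $n$ of each. A couple of consecutive nodes of the same color is $(m,m+1)$, $m\in\{1,\dots,2n\}$, indices mod $2n$ (so $(2n,1)$ allowed), with $m,m+1$ same color; list all couples as $(n_1,n_1+1),\dots,(n_{2k},n_{2k}+1)$ with $n_1<\dots<n_{2k}$; the black couples have first elements $s_1<\dots<s_k$ and the white couples $u_1<\dots<u_k$. For black $i$, white $j$: $a_{i,j}$ = number of $m$ with $\min(i,j)\le m<m+1\le\max(i,j)$, $m,m+1$ same color; $\mathrm{sign}(i,j)=(-1)^{(|i-j|+a_{i,j}-1)/2}$. If node 1 is black let $\varphi(u_i)=2i-1,\varphi(s_i)=2i$; if white let $\varphi(s_i)=2i-1,\varphi(u_i)=2i$; $\mathrm{sign}_c(\mathbf N)$ = sign of the permutation $(\varphi(n_1),\dots,\varphi(n_{2k}))$, and $1$ if $k=0$. *)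

(* Defs.v *)
(* Nodes are the naturals 1..2n; a coloring is col : nat -> bool,
   true = black, false = white (only values on 1..2n matter). *)
From mathcomp Require Import all_boot all_order all_algebra.
Set Implicit Arguments. Unset Strict Implicit. Unset Printing Implicit Defensive.
Import GRing.Theory Num.Theory.

Definition nodes (n : nat) : seq nat := iota 1 (2 * n).

Definition blacks (n : nat) (col : nat -> bool) : seq nat := [seq m <- nodes n | col m].
Definition whites (n : nat) (col : nat -> bool) : seq nat := [seq m <- nodes n | ~~ col m].

(* 0-based indexing: bnode n col a = b_(a+1), wnode n col d = w_(d+1) *)
Definition bnode (n : nat) (col : nat -> bool) (a : nat) : nat := nth 0 (blacks n col) a.
Definition wnode (n : nat) (col : nat -> bool) (d : nat) : nat := nth 0 (whites n col) d.

Definition acount (col : nat -> bool) (i j : nat) : nat :=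
  count (fun m => col m == col m.+1) (iota (minn i j) (maxn i j - minn i j)).

Definition sgn (col : nat -> bool) (i j : nat) : int :=
  (-1) ^+ (((maxn i j - minn i j) + acount col i j - 1) %/ 2).

Definition eps (col : nat -> bool) (i j : nat) : int :=
  (-1) ^+ (j < i) * sgn col i j.

Definition nxt (n m : nat) : nat := if m == 2 * n then 1 else m.+1.

(* first elements n_1 < ... < n_{2k} of couples of consecutive same-colored nodes *)
Definition couples (n : nat) (col : nat -> bool) : seq nat :=
  [seq m <- nodes n | col m == col (nxt n m)].
Definition bcouples (n : nat) (col : nat -> bool) : seq nat := [seq m <- couples n col | col m].
Definition wcouples (n : nat) (col : nat -> bool) : seq nat := [seq m <- couples n col | ~~ col m].

Definition phi (n : nat) (col : nat -> bool) (m : nat) : nat :=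
  if col m then
    (if col 1 then 2 * (index m (bcouples n col)).+1 else (2 * (index m (bcouples n col)).+1).-1)
  else
    (if col 1 then (2 * (index m (wcouples n col)).+1).-1 else 2 * (index m (wcouples n col)).+1).

Definition inversions (s : seq nat) : nat :=
  \sum_(i < size s) \sum_(j < size s) ((i < j) && (nth 0 s j < nth 0 s i)).

Definition seqsign (s : seq nat) : int := (-1) ^+ inversions s.

Definition signc (n : nat) (col : nat -> bool) : int := seqsign (map (phi n col) (couples n col)).

Definition floorsum (n : nat) (col : nat -> bool) : nat := \sum_(m <- couples n col) m./2.

(* Main.v *)
Require Import Defs.
From mathcomp Require Import all_boot all_order all_algebra.
From mathcomp Require Import zify ring.
Import GRing.Theory Num.Theory.

Section Gen.
Variable col : nat -> bool.

Definition cnt (m : nat) : nat := count (fun k => col k == col k.+1) (iota 1 m.-1).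
Definition Q (m : nat) : nat := m + cnt m.

Lemma cntS m : 0 < m -> cnt m.+1 = cnt m + (col m == col m.+1).
Proof.
move=> m0; rewrite /cnt /=.
have -> : m = (m.-1 + 1)%N by lia.
rewrite iotaD count_cat /= addn0 addn1 /=. by rewrite add1n.
Qed.

Lemma QS m : 0 < m -> Q m.+1 = (Q m + 1 + (col m == col m.+1))%N.
Proof. move=> m0; rewrite /Q cntS //; lia. Qed.

Lemma acount_lt i j : 0 < i -> i < j -> cnt j = (cnt i + acount col i j)%N.
Proof.
move=> i0 ij; rewrite /acount /cnt.
have -> : minn i j = i by lia.
have -> : maxn i j = j by lia.
have -> : j.-1 = (i.-1 + (j - i))%N by lia.
rewrite iotaD count_cat. have -> : (1 + i.-1)%N = i by lia. by [].
Qed.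

Lemma acountC i j : acount col i j = acount col j i.
Proof. by rewrite /acount minnC maxnC. Qed.

Lemma oddQ m : 0 < m -> odd (Q m) = (col m == col 1).
Proof.
elim: m => // m IH _.
case: m IH => [|m] IH; first by rewrite /Q /cnt /= eqxx.
rewrite QS // oddD oddD IH //=.
by case: (col m.+1); case: (col m.+2); case: (col 1).
Qed.

Lemma sign_mod (a b : nat) : a %% 2 = b %% 2 -> ((-1) ^+ a = (-1) ^+ b :> int)%R.
Proof.
move=> h; rewrite -signr_odd -(signr_odd _ b).
have -> : odd a = odd b by move: h; rewrite !modn2; case: (odd a); case: (odd b).
by [].
Qed.

Lemma eps_formula i j : 0 < i -> 0 < j -> col i -> ~~ col j ->
  eps col i j = ((-1) ^+ ((Q i).+1 %/ 2 + Q j %/ 2)%N)%R.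
Proof.
move=> i0 j0 ci cj.
have hij : i != j by apply/eqP=> e; move: cj; rewrite -e ci.
have hp : (Q i + Q j) %% 2 = 1.
  by rewrite modn2 oddD !oddQ //; move: ci cj; case: (col j); case: (col i); case: (col 1).
rewrite /eps /sgn.
case: (ltngtP i j) hij => // h _.
- have e := @acount_lt i j i0 h.
  have hQ : (Q i < Q j)%N by rewrite /Q; lia.
  rewrite expr0 mul1r; apply: sign_mod.
  rewrite /Q in hp hQ *. lia.
- have e := @acount_lt j i j0 h.
  rewrite acountC in e.
  rewrite expr1 -exprS; apply: sign_mod.
  have hQ : (Q j < Q i)%N by rewrite /Q; lia.
  rewrite /Q in hp hQ *. lia.
Qed.

End Gen.

Lemma sorted_nth_lt (s : seq nat) i j : sorted ltn s -> i < size s -> j < size s ->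
  (nth 0 s i < nth 0 s j) = (i < j).
Proof.
move=> ss hi hj; apply/idP/idP => h.
- rewrite ltnNge; apply/negP => hji.
  have := sorted_leq_nth leq_trans leqnn 0 (proj2 (andP (eq_ind _ is_true ss _ (ltn_sorted_uniq_leq s)))) j i hj hi hji. lia.
- exact: (sorted_ltn_nth ltn_trans 0 ss i j hi hj h).
Qed.

Lemma filter_nodes_sorted (P : pred nat) n : sorted ltn [seq m <- nodes n | P m].
Proof. apply: sorted_filter; [exact: ltn_trans | exact: iota_ltn_sorted]. Qed.

Lemma mem_nodes n m : (m \in nodes n) = (0 < m <= 2 * n).
Proof. rewrite /nodes mem_iota; lia. Qed.

Lemma consec (col : nat -> bool) (P : pred nat) n a :
  (forall x y, (P x == P y) = (col x == col y)) ->
  (a.+1 < size [seq m <- nodes n | P m])%N ->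
  (forall m, nth 0 [seq m <- nodes n | P m] a < m -> m.+1 < nth 0 [seq m <- nodes n | P m] a.+1 ->
     ~ (~~ P m /\ ~~ P m.+1)) ->
  Q col (nth 0 [seq m <- nodes n | P m] a.+1) = (Q col (nth 0 [seq m <- nodes n | P m] a) + 2)%N.
Proof.
move=> hP ha hno; set s := [seq m <- nodes n | P m] in ha hno *.
set u := nth 0 s a; set v := nth 0 s a.+1.
have ss : sorted ltn s := filter_nodes_sorted P n.
have uin : u \in s by apply: mem_nth; exact: ltnW.
have vin : v \in s by apply: mem_nth.
move: (uin) (vin); rewrite !mem_filter !mem_nodes => /andP[Pu /andP[u0 _]] /andP[Pv /andP[v0 _]].
have uv : u < v by rewrite /u /v sorted_nth_lt //; lia.
have between : forall m, u < m -> m < v -> ~~ P m.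
  move=> m um mv; apply/negP => Pm.
  have min : m \in s by rewrite mem_filter Pm mem_nodes; move: v0 => _; 
    move: vin; rewrite mem_filter mem_nodes => /andP[_ /andP[_ hv]]; lia.
  have hi := index_mem m s; rewrite min in hi.
  have em := nth_index 0 min.
  move: um mv; rewrite -em /u /v !sorted_nth_lt //; lia.
have vle : v <= u + 2.
  rewrite leqNgt; apply/negP => h.
  apply: (hno u.+1); [lia | lia | split; apply: between; lia].
have Pcol : forall x y, P x -> P y -> col x == col y by move=> x y Px Py; rewrite -hP Px Py.
have NPcol : forall x y, P x -> ~~ P y -> col x == col y = false.
  by move=> x y Px Py; rewrite -hP Px (negbTE Py).
case: (ltngtP v (u + 2)) vle => // hv _.
- have -> : v = u.+1 by lia.
  rewrite QS // Pcol //; [lia | by rewrite -[u.+1](_ : v = _) //; lia].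
- have ev : v = u.+2 by lia.
  have Pu2 : P u.+2 by rewrite -ev.
  rewrite ev QS // QS //.
  have Pu1 : ~~ P u.+1 by apply: between; lia.
  rewrite NPcol //.
  have -> : (col u.+1 == col u.+2) = false by rewrite eq_sym NPcol.
  lia.
Qed.

Lemma count_nth_sum (P : pred nat) (t : seq nat) :
  count P t = \sum_(i < size t) P (nth 0 t i).
Proof.
rewrite -sum1_count (big_nth 0) big_mkord big_mkcond /=.
by apply: eq_bigr => i _; case: (P _).
Qed.

Lemma inversions_rcons t v :
  inversions (rcons t v) = inversions t + count (fun y => v < y) t.
Proof.
rewrite /inversions size_rcons big_ord_recr /=.
rewrite (@big1 _ _ _ _ _ _ (fun j : 'I_(size t).+1 => _)); last first.
  by move=> j _; have := ltn_ord j; case: ltnP.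
rewrite addn0 count_nth_sum -big_split /=.
apply: eq_big => // i _.
rewrite big_ord_recr /= ltn_ord /= !nth_rcons ltn_ord /= eqxx.
congr (_ + _); last by rewrite ltnn.
by apply: eq_bigr => j _; rewrite nth_rcons ltn_ord.
Qed.

Lemma map_index_uniq (t : seq nat) : uniq t -> [seq index m t | m <- t] = iota 0 (size t).
Proof.
elim: t => //= x t IH /andP[xt ut].
rewrite eqxx /=; congr (_ :: _).
rewrite -(addn0 1) iotaDl -IH // -map_comp; apply/eq_in_map => y yt /=.
have -> : (x == y) = false by apply/eqP => e; move: xt; rewrite e yt.
by rewrite add1n.
Qed.

Lemma count_index_uniq (P : pred nat) (t : seq nat) : uniq t ->
  count (fun m => P (index m t)) t = count P (iota 0 (size t)).
Proof. by move=> ut; rewrite -map_index_uniq // count_map. Qed.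

Lemma count_ge_iota p j : count (fun k => p <= k) (iota 0 j) = j - p.
Proof.
elim: j => // j IH.
rewrite -addn1 iotaD count_cat IH /= add0n addn0.
case: (leqP p j) => h; lia.
Qed.

Definition valc (q : pred nat) (s : seq nat) (m : nat) : nat :=
  if q m then 2 * (index m [seq x <- s | q x]).+1
  else (2 * (index m [seq x <- s | ~~ q x]).+1).-1.

Definition Ssum (q : pred nat) (s : seq nat) : nat := \sum_(m <- s | ~~ q m) index m s.

Lemma valc_rcons q s x m : m \in s -> valc q (rcons s x) m = valc q s m.
Proof.
move=> ms; rewrite /valc -!cats1 !filter_cat !index_cat.
case qm: (q m).
- by rewrite mem_filter qm ms.
- by rewrite mem_filter qm ms.
Qed.

Lemma count_split (P q : pred nat) (s : seq nat) :
  count P s = count P [seq x <- s | q x] + count P [seq x <- s | ~~ q x].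
Proof. by elim: s => //= y s ->; case: (q y) => /=; lia. Qed.

Lemma count_valc q s v : uniq s ->
  count (fun y => v < y) [seq valc q s m | m <- s] =
  count (fun k => v < 2 * k.+1) (iota 0 (count q s)) +
  count (fun k => v < (2 * k.+1).-1) (iota 0 (count (fun x => ~~ q x) s)).
Proof.
move=> us; rewrite count_map (count_split _ q).
rewrite -(size_filter q s) -(size_filter (fun x => ~~ q x) s).
rewrite -(count_index_uniq _ _ (filter_uniq q us)) -(count_index_uniq _ _ (filter_uniq (fun x => ~~ q x) us)).
congr (_ + _); apply: eq_in_count => m /=; rewrite mem_filter /valc => /andP[h _].
- by rewrite h.
- by rewrite (negbTE h).
Qed.

Lemma shuffle_step q s x : uniq s -> x \notin s ->
  inversions [seq valc q (rcons s x) m | m <- rcons s x] =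
  inversions [seq valc q s m | m <- s] +
  (if q x then count (fun x => ~~ q x) s - (count q s).+1 else count q s - count (fun x => ~~ q x) s).
Proof.
move=> us xs.
rewrite map_rcons inversions_rcons.
have -> : [seq valc q (rcons s x) m | m <- s] = [seq valc q s m | m <- s].
  by apply/eq_in_map => m ms; rewrite valc_rcons.
congr (_ + _); rewrite count_valc //.
rewrite /valc -cats1 !filter_cat !index_cat.
case qx: (q x) => /=.
- rewrite qx /= mem_filter (negbTE xs) andbF eqxx addn0 size_filter.
  have E : count (fun x => q x) s = count q s by [].
  rewrite E (@eq_in_count _ _ (fun k => false)); last by move=> k; rewrite mem_iota; lia.
  rewrite count_pred0 add0n.
  rewrite (@eq_in_count _ _ (fun k => (count q s).+1 <= k)); first by rewrite count_ge_iota.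
  by move=> k _; lia.
- rewrite qx /= mem_filter (negbTE xs) andbF eqxx addn0 size_filter.
  have E : count (fun x => ~~ q x) s = count (fun x => ~~ q x) s by [].
  rewrite [X in _ + X](@eq_in_count _ _ (fun k => false)); last by move=> k; rewrite mem_iota; lia.
  rewrite count_pred0 addn0.
  rewrite (@eq_in_count _ _ (fun k => count (fun x => ~~ q x) s <= k)); first by rewrite count_ge_iota.
  by move=> k _; lia.
Qed.

Lemma Ssum_rcons q s x : uniq s -> x \notin s ->
  Ssum q (rcons s x) = Ssum q s + (if q x then 0 else size s).
Proof.
move=> us xs; rewrite /Ssum -cats1 big_cat /= big_cons big_nil.
rewrite index_cat (negbTE xs) /= eqxx addn0.
congr (_ + _); last by case: (q x); rewrite ?addn0.
rewrite big_seq_cond [RHS]big_seq_cond; apply: eq_bigr => m /andP[ms _].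
by rewrite index_cat ms.
Qed.

Lemma shuffle q s : uniq s ->
  inversions [seq valc q s m | m <- s] %% 2 =
  (Ssum q s + (count (fun x => ~~ q x) s - count q s) %/ 2) %% 2.
Proof.
elim/last_ind: s => [|s x IH]; first by rewrite /inversions /Ssum /= big_ord0 big_nil.
rewrite rcons_uniq => /andP[xs us].
rewrite shuffle_step // Ssum_rcons // -!cats1 !count_cat /= addn0.
have sz : size s = count q s + count (fun x => ~~ q x) s by rewrite count_predC.
move: (IH us) sz; case: (q x) => /=;
  set I := inversions _; set S := Ssum q s; set i := count q s;
  set j := count (fun x => ~~ q x) s; set z := size s; clearbody I S i j z; lia.
Qed.

Definition gfun (x1 xl : bool) (l c b : nat) : nat :=
  (xl * (l %% 2) + (l %% 2) * ((l + c + 2) %/ 2) + (c %% 2) * (l %/ 2) + b * (1 - x1)) %% 2.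

Lemma gstep x1 xl x' l c b : l < 4 -> c < 4 -> b < 2 -> odd (l.+1 + c) = (xl == x1) ->
  (gfun x1 xl l c b + (l.+1 + c + xl) %/ 2 +
   (if xl == x' then (if xl == x1 then 0 else c) + l.+1 %/ 2 else 0)) %% 2
  = gfun x1 x' (l.+1 %% 4) ((c + (xl == x')) %% 4) ((b + xl) %% 2).
Proof.
move=> hl hc hb ho.
case: l hl ho => [|[|[|[|l]]]] hl ho //.
all: case: c hc ho => [|[|[|[|c]]]] hc ho //.
all: case: b hb => [|[|b]] hb //.
all: move: ho; case: x1; case: xl; case: x' => ho.
all: by [].
Qed.

Lemma gend x1 l c b : l < 4 -> c < 4 -> b < 2 -> l %% 2 = 0 -> c %% 2 = 0 ->
  gfun x1 x1 l c b = (b * (1 - x1)) %% 2.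
Proof.
move=> hl hc hb.
case: l hl => [|[|[|[|l]]]] hl //.
all: case: c hc => [|[|[|[|c]]]] hc //.
all: case: b hb => [|[|b]] hb //.
all: by case: x1.
Qed.

Lemma odd_eq_mod a b : a %% 2 = b %% 2 -> odd a = odd b.
Proof. by rewrite !modn2; case: (odd a); case: (odd b). Qed.

Section Scan.
Variable col : nat -> bool.

Definition K L := [seq m <- iota 1 L | col m == col m.+1].
Definition qcol := fun m => col m == col 1.
Definition Esum L := \sum_(m <- iota 1 L) (Q col m + col m) %/ 2.
Definition Fsum L := \sum_(m <- K L) m./2.
Definition Bc L := count col (iota 1 L).

Lemma iotaS1 L : iota 1 L.+1 = rcons (iota 1 L) L.+1.
Proof. by have := iotaD 1 L 1; rewrite addn1 => ->; rewrite cats1 add1n. Qed.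

Lemma K_S L : K L.+1 = if col L.+1 == col L.+2 then rcons (K L) L.+1 else K L.
Proof. by rewrite /K iotaS1 filter_rcons. Qed.

Lemma K_uniq L : uniq (K L).
Proof. by rewrite filter_uniq // iota_uniq. Qed.

Lemma K_notin L : L.+1 \notin K L.
Proof. by rewrite mem_filter mem_iota; apply/negP => /andP[_ h]; lia. Qed.

Lemma Q_K L : Q col L.+1 = L.+1 + size (K L).
Proof. by rewrite /Q /cnt size_filter. Qed.

Lemma scan L :
  (Esum L + Ssum qcol (K L) + Fsum L) %% 2 =
  gfun (col 1) (col L.+1) (L %% 4) (size (K L) %% 4) (Bc L %% 2).
Proof.
elim: L => [|L IH]; first by rewrite /Esum /Fsum /Ssum /K /= !big_nil /gfun; case: (col 1).
have ho : odd ((L %% 4).+1 + size (K L) %% 4) = (col L.+1 == col 1).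
  rewrite -oddQ // Q_K; apply: odd_eq_mod; lia.
have gs := gstep (col 1) (col L.+1) (col L.+2) (L %% 4) (size (K L) %% 4) (Bc L %% 2) (ltn_pmod L (isT : 0 < 4))
   (ltn_pmod (size (K L)) (isT : 0 < 4)) (ltn_pmod (Bc L) (isT : 0 < 2)) ho.
have eL : L.+1 %% 4 = (L %% 4).+1 %% 4 by lia.
have eB : Bc L.+1 %% 2 = (Bc L %% 2 + col L.+1) %% 2.
  by rewrite /Bc iotaS1 -cats1 count_cat /=; case: (col L.+1); rewrite /= ?addn0; lia.
have eE : Esum L.+1 = Esum L + (L.+1 + size (K L) + col L.+1) %/ 2.
  by rewrite /Esum iotaS1 -cats1 big_cat big_seq1 Q_K.
rewrite eL eB eE.
have hK := K_S L.
rewrite /Fsum hK.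
case cc: (col L.+1 == col L.+2) => /=.
- rewrite Ssum_rcons ?K_uniq ?K_notin // -cats1 big_cat big_seq1 size_cat /= -/(Fsum L).
  have e4 : (size (K L) + 1) %% 4 = (size (K L) %% 4 + 1) %% 4 by lia.
  rewrite e4; rewrite -/(Fsum L) in IH.
  move: gs; rewrite cc /qcol.
  move: IH. rewrite -/(Esum L).
  set E := Esum L; set S := Ssum _ _; set F := Fsum L; set k := size (K L); set B := Bc L.
  set g1 := gfun _ _ _ _ _; set g2 := gfun _ _ _ _ _.
  clearbody E S F k B g1 g2.
  rewrite !divn2.
  case: (col L.+1 == col 1) => /=; case: (col L.+1) => /=; lia.
- rewrite -/(Fsum L).
  move: gs; rewrite cc /qcol /= !addn0 modn_mod.
  move: IH.
  set E := Esum L; set S := Ssum _ _; set F := Fsum L; set k := size (K L); set B := Bc L.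
  set g1 := gfun _ _ _ _ _; set g2 := gfun _ _ _ _ _.
  clearbody E S F k B g1 g2.
  case: (col L.+1) => /=; lia.
Qed.

Lemma balance L :
  count qcol (K L) + count (fun x => ~~ qcol x) (iota 1 L.+1) + (col L.+1 == col 1) =
  count (fun x => ~~ qcol x) (K L) + count qcol (iota 1 L.+1).
Proof.
elim: L => [|L IH]; first by rewrite /K /= /qcol eqxx.
rewrite K_S (iotaS1 L.+1).
move: IH; rewrite -!cats1 !count_cat /= /qcol !addn0.
case e1: (col L.+1); case e2: (col L.+2) => /=; rewrite -?cats1 ?count_cat /=;
  case: (col 1) => /=; lia.
Qed.

End Scan.

Lemma sign_pm k : ((-1) ^+ k = 1 :> int \/ (-1) ^+ k = -1 :> int)%R.
Proof. rewrite -signr_odd; case: (odd k); [right | left]; by rewrite ?expr1 ?expr0. Qed.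

Lemma pm_sq (x : int) : (x = 1 \/ x = -1)%R -> (x * x = 1)%R.
Proof. by case=> ->; rewrite ?mulr1 ?mulrNN ?mulr1. Qed.

Lemma sign_sum (I : Type) (r : seq I) (P : pred I) (f : I -> nat) :
  ((-1) ^+ (\sum_(i <- r | P i) f i) = \prod_(i <- r | P i) (-1) ^+ f i :> int)%R.
Proof.
apply: (big_ind2 (fun k (x : int) => ((-1) ^+ k)%R = x)) => //.
by move=> x1 x2 y1 y2 <- <-; rewrite exprD.
Qed.

Lemma pm_sign (x : int) : (x = 1 \/ x = -1)%R -> ((-1) ^+ (x == -1)%R = x)%R.
Proof. by case=> ->. Qed.

Section Main.
Variable n : nat.
Variable col : nat -> bool.
Hypothesis hcount : count col (nodes n) = n.

Lemma size_blacks : size (blacks n col) = n.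
Proof. by rewrite size_filter. Qed.

Lemma size_whites : size (whites n col) = n.
Proof.
rewrite size_filter.
have := count_predC col (nodes n); rewrite hcount /nodes size_iota.
have -> : count (predC col) (iota 1 (2 * n)) = count (fun m => ~~ col m) (iota 1 (2 * n)) by [].
lia.
Qed.

Lemma bnode_prop a : a < n -> 0 < bnode n col a /\ col (bnode n col a).
Proof.
move=> an; have : bnode n col a \in blacks n col by apply: mem_nth; rewrite size_blacks.
by rewrite mem_filter mem_nodes => /andP[-> /andP[-> _]].
Qed.

Lemma wnode_prop a : a < n -> 0 < wnode n col a /\ ~~ col (wnode n col a).
Proof.
move=> an; have : wnode n col a \in whites n col by apply: mem_nth; rewrite size_whites.
by rewrite mem_filter mem_nodes => /andP[-> /andP[-> _]].
Qed.

Lemma partA1 a : a.+1 < n ->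
  (forall m : nat, bnode n col a < m -> m.+1 < bnode n col a.+1 ->
        ~ (col m = false /\ col m.+1 = false)) ->
  forall w : nat, w \in whites n col ->
    eps col (bnode n col a.+1) w = (- eps col (bnode n col a) w)%R.
Proof.
move=> an H w; rewrite mem_filter mem_nodes => /andP[cw /andP[w0 _]].
have hQ : Q col (bnode n col a.+1) = (Q col (bnode n col a) + 2)%N.
  apply: (@consec col col n a) => //; first by rewrite size_blacks.
  by move=> m h1 h2 [/negbTE e1 /negbTE e2]; exact: (H m h1 h2).
have [b0 cb] := bnode_prop a (ltnW an).
have [b1 cb1] := bnode_prop a.+1 an.
rewrite !eps_formula // hQ.
have -> : ((Q col (bnode n col a) + 2).+1 %/ 2 + Q col w %/ 2 =
  ((Q col (bnode n col a)).+1 %/ 2 + Q col w %/ 2).+1)%N by lia.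
by rewrite exprS mulN1r.
Qed.

Lemma partA2 c : c.+1 < n ->
  (forall m : nat, wnode n col c < m -> m.+1 < wnode n col c.+1 ->
        ~ (col m = true /\ col m.+1 = true)) ->
  forall b : nat, b \in blacks n col ->
    eps col b (wnode n col c.+1) = (- eps col b (wnode n col c))%R.
Proof.
move=> cn H b; rewrite mem_filter mem_nodes => /andP[cb /andP[b0 _]].
have hQ : Q col (wnode n col c.+1) = (Q col (wnode n col c) + 2)%N.
  apply: (@consec col (fun m => ~~ col m) n c) => //.
  - by move=> x y; case: (col x); case: (col y).
  - by rewrite -/(whites n col) size_whites.
  - by move=> m h1 h2 [/negPn e1 /negPn e2]; exact: (H m h1 h2).
have [w0 cw] := wnode_prop c (ltnW cn).
have [w1 cw1] := wnode_prop c.+1 cn.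
rewrite !eps_formula // hQ.
have -> : ((Q col b).+1 %/ 2 + (Q col (wnode n col c) + 2) %/ 2 =
  ((Q col b).+1 %/ 2 + Q col (wnode n col c) %/ 2).+1)%N by lia.
by rewrite exprS mulN1r.
Qed.

Definition Rs (a : nat) : int := ((-1) ^+ ((Q col (bnode n col a)).+1 %/ 2))%R.
Definition Cs (d : nat) : int := ((-1) ^+ (Q col (wnode n col d) %/ 2))%R.

Lemma epsRC a d : a < n -> d < n -> eps col (bnode n col a) (wnode n col d) = (Rs a * Cs d)%R.
Proof.
move=> an dn; have [b0 cb] := bnode_prop a an; have [w0 cw] := wnode_prop d dn.
by rewrite eps_formula // exprD.
Qed.

Lemma partB1 : exists (r c : 'I_n -> int),
     (forall a, r a = 1 \/ r a = -1)%R /\ (forall d, c d = 1 \/ c d = -1)%R /\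
     (forall a d : 'I_n, r a * c d * eps col (bnode n col a) (wnode n col d) = (-1) ^+ (a + d)%N)%R.
Proof.
exists (fun a => (-1) ^+ a * Rs a)%R, (fun d => (-1) ^+ d * Cs d)%R.
split; [|split].
- by move=> a; rewrite /Rs -exprD; exact: sign_pm.
- by move=> d; rewrite /Cs -exprD; exact: sign_pm.
- move=> a d; rewrite epsRC //.
  have hR := pm_sq _ (sign_pm ((Q col (bnode n col a)).+1 %/ 2)).
  have hC := pm_sq _ (sign_pm (Q col (wnode n col d) %/ 2)).
  rewrite -/(Rs a) in hR; rewrite -/(Cs d) in hC.
  have E : ((-1) ^+ a * Rs a * ((-1) ^+ d * Cs d) * (Rs a * Cs d) =
     (-1) ^+ a * (-1) ^+ d * (Rs a * Rs a) * (Cs d * Cs d) :> int)%R by ring.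
  by rewrite E hR hC !mulr1 exprD.
Qed.

End Main.

Section Core.
Variable n : nat.
Variable col : nat -> bool.
Hypothesis hcount : count col (nodes n) = n.
Hypothesis npos : 0 < n.

Definition col' (m : nat) : bool := if m == (2 * n).+1 then col 1 else col m.

Lemma col'E m : m <= 2 * n -> col' m = col m.
Proof. by move=> h; rewrite /col' ifN //; apply/eqP => e; lia. Qed.

Lemma col'_end : col' (2 * n).+1 = col 1.
Proof. by rewrite /col' eqxx. Qed.

Lemma col'1 : col' 1 = col 1.
Proof. by rewrite col'E //; lia. Qed.

Lemma K_couples : K col' (2 * n) = couples n col.
Proof.
rewrite /K /couples /nodes; apply: eq_in_filter => m; rewrite mem_iota => hm.
rewrite col'E; last by lia.
rewrite /nxt; have [->|ne] := eqVneq m (2 * n); first by rewrite col'_end.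
by rewrite col'E //; lia.
Qed.

Lemma Q_col' m : m <= 2 * n -> Q col' m = Q col m.
Proof.
move=> hm; rewrite /Q /cnt; congr (_ + _); apply: eq_in_count => k; rewrite mem_iota => hk /=.
by rewrite !col'E //; lia.
Qed.

Lemma Esum_col' : Esum col' (2 * n) = \sum_(m <- nodes n) (Q col m + col m) %/ 2.
Proof.
rewrite /Esum /nodes big_seq [RHS]big_seq; apply: eq_bigr => m; rewrite mem_iota => hm.
by rewrite Q_col' ?col'E //; lia.
Qed.

Lemma Bc_col' : Bc col' (2 * n) = n.
Proof.
rewrite /Bc; transitivity (count col (nodes n)); last exact: hcount.
rewrite /nodes; apply: eq_in_count => m; rewrite mem_iota => hm.
by rewrite col'E //; lia.
Qed.

Lemma count_same : count (qcol col') (nodes n) = n.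
Proof.
rewrite /qcol col'1 /nodes.
have e : {in iota 1 (2 * n), (fun m => col' m == col 1) =1 (fun m => col m == col 1)}.
  by move=> m; rewrite mem_iota => hm /=; rewrite col'E //; lia.
rewrite (eq_in_count e).
case: (col 1).
- rewrite (@eq_count _ _ col); first exact: hcount.
  by move=> m /=; case: (col m).
- rewrite (@eq_count _ _ (fun m => ~~ col m)); first by rewrite -size_filter (size_whites n col hcount).
  by move=> m /=; case: (col m).
Qed.

Lemma couples_le m : m \in couples n col -> 0 < m <= 2 * n.
Proof. by rewrite mem_filter mem_nodes => /andP[_ ->]. Qed.

Lemma qq_couples m : m \in couples n col -> qcol col' m = (col m == col 1).
Proof. by move=> /couples_le h; rewrite /qcol col'1 col'E //; lia. Qed.

Lemma phi_valq : map (phi n col) (couples n col) =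
  map (valc (qcol col') (couples n col)) (couples n col).
Proof.
have f1 : [seq x <- couples n col | qcol col' x] = [seq x <- couples n col | col x == col 1].
  by apply: eq_in_filter => x /qq_couples.
have f2 : [seq x <- couples n col | ~~ qcol col' x] = [seq x <- couples n col | col x != col 1].
  by apply: eq_in_filter => x /qq_couples ->.
apply/eq_in_map => m mc.
rewrite /phi /valc /bcouples /wcouples f1 f2 qq_couples //.
have e1 : [seq x <- couples n col | col x == true] = [seq x <- couples n col | col x].
  by apply: eq_filter => x; case: (col x).
have e2 : [seq x <- couples n col | col x != true] = [seq x <- couples n col | ~~ col x].
  by apply: eq_filter => x; case: (col x).
have e3 : [seq x <- couples n col | col x == false] = [seq x <- couples n col | ~~ col x].
  by apply: eq_filter => x; case: (col x).
have e4 : [seq x <- couples n col | col x != false] = [seq x <- couples n col | col x].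
  by apply: eq_filter => x; case: (col x).
by case c1: (col 1); case cm: (col m); rewrite /= ?e1 ?e2 ?e3 ?e4.
Qed.

Lemma core : ((-1) ^+ (\sum_(m <- nodes n) (Q col m + col m) %/ 2) =
  (if col 1 then 1 else (-1) ^+ n) * signc n col * (-1) ^+ floorsum n col :> int)%R.
Proof.
have hs := scan col' (2 * n).
rewrite Esum_col' Bc_col' /Fsum K_couples col'_end col'1 in hs.
have hb := balance col' (2 * n).
rewrite K_couples col'_end col'1 iotaS1 -!cats1 !count_cat /= in hb.
have hq : qcol col' (2 * n).+1 = true by rewrite /qcol col'_end col'1 eqxx.
rewrite hq eqxx /= -/(nodes n) count_same in hb.
have hpc := count_predC (qcol col') (nodes n).
rewrite count_same /nodes size_iota -/(nodes n) in hpc.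
have hpc' : count (fun x => ~~ qcol col' x) (nodes n) = n.
  have -> : count (fun x => ~~ qcol col' x) (nodes n) = count (predC (qcol col')) (nodes n) by [].
  lia.
rewrite hpc' in hb.
have us : uniq (couples n col) by rewrite filter_uniq // iota_uniq.
have hsh := shuffle (qcol col') _ us.
have sz := count_predC (qcol col') (couples n col).
change (count (predC (qcol col')) (couples n col)) with (count (fun x => ~~ qcol col' x) (couples n col)) in sz.
have ev1 : ((2 * n) %% 4) %% 2 = 0 by lia.
have ev2 : (size (couples n col) %% 4) %% 2 = 0.
  move: hb sz; set i := count (qcol col') _; set j := count (fun x => ~~ _) (couples n col).
  set z := size _; clearbody i j z; lia.
have hg := gend (col 1) ((2 * n) %% 4) (size (couples n col) %% 4) (n %% 2) (ltn_pmod (2 * n) (isT : 0 < 4)) (ltn_pmod (size (couples n col)) (isT : 0 < 4))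
   (ltn_pmod n (isT : 0 < 2)) ev1 ev2.
rewrite hg in hs.
rewrite /signc /seqsign phi_valq.
have -> : (if col 1 then 1 else (-1) ^+ n : int)%R = ((-1) ^+ (n * (1 - col 1)))%R.
  by case: (col 1); rewrite ?muln0 ?muln1.
rewrite -!exprD; apply: sign_mod.
move: hs hsh hb sz.
set E := \sum_(m <- _) _; set S := Ssum _ _; rewrite /floorsum; set F := \sum_(m <- couples n col) m./2; set I := inversions _.
set i := count (qcol col') _; set j := count _ (couples n col); set z := size _.
clearbody E S F I i j z.
case: (col 1) => /=; lia.
Qed.

End Core.

Lemma rearr (P PR PC A B : int) k :
  (P * PR * A ^+ k * (P * PC * B ^+ k) = PR * PC * (P * P) * (A * B) ^+ k)%R.
Proof. rewrite exprMn; move: (A ^+ k)%R (B ^+ k)%R => An Bn; ring. Qed.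

Lemma rearr2 (P PR PC c C r R : int) k :
  (P * PR * (c ^+ k * C ^+ k) * (P * PC * (r ^+ k * R ^+ k)) = PR * PC * (P * P) * (r * c * (R * C)) ^+ k)%R.
Proof. rewrite !exprMn; move: (c ^+ k)%R (C ^+ k)%R (r ^+ k)%R (R ^+ k)%R => a1 a2 a3 a4; ring. Qed.

Section Fin.
Variable n : nat.
Variable col : nat -> bool.
Hypothesis hcount : count col (nodes n) = n.

Lemma prodR : (\prod_(a < n) Rs n col a * \prod_(d < n) Cs n col d =
  (-1) ^+ (\sum_(m <- nodes n) (Q col m + col m) %/ 2) :> int)%R.
Proof.
have eb : (\prod_(a < n) Rs n col a = (-1) ^+ (\sum_(m <- blacks n col) (Q col m).+1 %/ 2) :> int)%R.
  by rewrite sign_sum [RHS](big_nth 0) size_blacks // big_mkord.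
have ew : (\prod_(d < n) Cs n col d = (-1) ^+ (\sum_(m <- whites n col) Q col m %/ 2) :> int)%R.
  by rewrite sign_sum [RHS](big_nth 0) size_whites // big_mkord.
rewrite eb ew -exprD; congr (_ ^+ _)%R.
rewrite [RHS](bigID col) /= /blacks /whites !big_filter.
congr (_ + _); apply: eq_bigr => m cm.
- by rewrite cm addn1.
- by rewrite (negbTE cm) addn0.
Qed.

Lemma solve4 (r c R C s : int) : (c * c = 1)%R -> (R * R = 1)%R -> (C * C = 1)%R ->
  (r * c * (R * C) = s)%R -> r = (s * R * (c * C))%R.
Proof.
move=> hc hR hC h.
have E : r = (r * (c * c) * (R * R) * (C * C))%R by rewrite hc hR hC !mulr1.
rewrite E -h; ring.
Qed.

Lemma partB2 (r c : 'I_n -> int) :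
  (forall a, r a = 1 \/ r a = -1)%R -> (forall d, c d = 1 \/ c d = -1)%R ->
  (forall a d : 'I_n, r a * c d * eps col (bnode n col a) (wnode n col d) = (-1) ^+ (a + d)%N)%R ->
  let t := ((\sum_(a < n) (r a == -1)%R) + (\sum_(d < n) (c d == -1)%R))%N in
  ((-1) ^+ t = (if col 1%N then 1 else (-1) ^+ n) * signc n col * (-1) ^+ floorsum n col)%R.
Proof.
move=> hr hc hrc t.
have ht : ((-1) ^+ t = \prod_(a < n) r a * \prod_(d < n) c d :> int)%R.
  rewrite /t exprD !sign_sum; congr (_ * _)%R; apply: eq_bigr => i _; exact: pm_sign.
rewrite ht.
case: (posnP n) => [n0 | npos].
  have e0 : forall F : 'I_n -> int, (\prod_(i < n) F i = 1)%R.
    by move=> F; apply: big1 => i; have := ltn_ord i; rewrite {2}n0.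
  rewrite !e0 mulr1 /signc /seqsign /floorsum /couples /nodes n0 /= /inversions big_ord0 big_nil.
  by case: (col 1).
set o := Ordinal npos.
have sqR a : (Rs n col a * Rs n col a = 1)%R by apply: pm_sq; exact: sign_pm.
have sqC a : (Cs n col a * Cs n col a = 1)%R by apply: pm_sq; exact: sign_pm.
have er : forall a : 'I_n, r a = ((-1) ^+ a * Rs n col a * (c o * Cs n col o))%R.
  move=> a; have := hrc a o; rewrite (epsRC n col hcount) //= addn0.
  by apply: solve4; [exact: pm_sq | |].
have ec : forall d : 'I_n, c d = ((-1) ^+ d * Cs n col d * (r o * Rs n col o))%R.
  move=> d; have := hrc o d; rewrite (epsRC n col hcount) //= add0n => h.
  have h' : (c d * r o * (Cs n col d * Rs n col o) = (-1) ^+ d)%R.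
    by rewrite -h; ring.
  by apply: solve4 h'; [exact: pm_sq | |].
have h00 : (r o * c o * (Rs n col o * Cs n col o) = 1)%R.
  by have := hrc o o; rewrite (epsRC n col hcount) //= addn0 expr0.
rewrite (eq_bigr _ (fun a _ => er a)) (eq_bigr _ (fun d _ => ec d)).
rewrite !big_split /= !prodr_const !card_ord.
set P := (\prod_(i < n) (-1) ^+ i)%R.
have hP : (P * P = 1 :> int)%R by rewrite /P -sign_sum; apply: pm_sq; exact: sign_pm.
set PR := (\prod_(i < n) Rs n col i)%R; set PC := (\prod_(i < n) Cs n col i)%R.
rewrite rearr2.
have h00' : (r o * c o * (Rs n col 0 * Cs n col 0) = 1)%R by exact: h00.
rewrite hP h00' expr1n !mulr1 /PR /PC prodR.
exact: core.
Qed.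

End Fin.

Local Open Scope ring_scope.

Theorem mainTheorem15 (n : nat) (col : nat -> bool)
  (hcount : count col (nodes n) = n) :
  (* (a), rows *)
  (forall a : nat, (a.+1 < n)%N ->
     (forall m : nat, (bnode n col a < m)%N -> (m.+1 < bnode n col a.+1)%N ->
        ~ (col m = false /\ col m.+1 = false)) ->
     forall w : nat, w \in whites n col ->
       eps col (bnode n col a.+1) w = - eps col (bnode n col a) w) /\
  (* (a), columns *)
  (forall c : nat, (c.+1 < n)%N ->
     (forall m : nat, (wnode n col c < m)%N -> (m.+1 < wnode n col c.+1)%N ->
        ~ (col m = true /\ col m.+1 = true)) ->
     forall b : nat, b \in blacks n col ->
       eps col b (wnode n col c.+1) = - eps col b (wnode n col c)) /\
  (* (b) *)
  (exists (r c : 'I_n -> int),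
     (forall a, r a = 1 \/ r a = -1) /\ (forall d, c d = 1 \/ c d = -1) /\
     (forall a d : 'I_n, r a * c d * eps col (bnode n col a) (wnode n col d) = (-1) ^+ (a + d)%N)) /\
  (forall (r c : 'I_n -> int),
     (forall a, r a = 1 \/ r a = -1) -> (forall d, c d = 1 \/ c d = -1) ->
     (forall a d : 'I_n, r a * c d * eps col (bnode n col a) (wnode n col d) = (-1) ^+ (a + d)%N) ->
     let t := ((\sum_(a < n) (r a == -1)%R) + (\sum_(d < n) (c d == -1)%R))%N in
     (-1) ^+ t = (if col 1%N then 1 else (-1) ^+ n) * signc n col * (-1) ^+ floorsum n col).
Proof.
split; [exact: partA1 | split; [exact: partA2 | split; [exact: partB1 | exact: partB2]]].
Qed.
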